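(* Let $\alpha=(\sqrt5-1)/2$. Define $\varepsilon_1(n)=1$ if $n=F_{2k}-1$ for some $k\ge1$ and $\varepsilon_1(n)=0$ otherwise; define $\varepsilon_2(n)=1$ if $n=F_{2k+1}-1$ for some $k\ge1$ and $\varepsilon_2(n)=0$ otherwise. Then for all $n\ge0$, $$a(n)=\lfloor (n+1)\alpha\rfloor+\varepsilon_1(n),\qquad b(n)=\lfloor (n+1)\alpha\rfloor-\varepsilon_2(n).$$
   Context: $\mathbb{N}=\{0,1,2,\dots\}$. Fibonacci numbers: $F_0=0$, $F_1=1$, $F_k=F_{k-1}+F_{k-2}$. Hofstadter's ''married'' sequences $a,b:\mathbb{N}\to\mathbb{N}$ are defined by $a(0)=1$, $b(0)=0$ and, for $n\ge1$, $b(n)=n-a(b(n-1))$ and $a(n)=n-b(a(n-1))$ (computing $b(n)$ before $a(n)$ at each step). First values: $a=1,1,2,2,3,3,4,5,5,6,6,\dots$, $b=0,0,1,2,2,3,4,4,5,6,6,\dots$. *)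

(* Defs.v *)
From Stdlib Require Import Reals Lia List Arith.
Open Scope R_scope.

Fixpoint fib (k : nat) : nat :=
  match k with
  | O => 0
  | S k' => match k' with
            | O => 1
            | S k'' => (fib k' + fib k'')%nat
            end
  end.

(* hist n = [(a n, b n); (a (n-1), b (n-1)); ...; (a 0, b 0)] (newest first) *)
Definition lookA (h : list (nat * nat)) (i : nat) : nat :=
  fst (nth (length h - 1 - i)%nat h (0%nat, 0%nat)).
Definition lookB (h : list (nat * nat)) (i : nat) : nat :=
  snd (nth (length h - 1 - i)%nat h (0%nat, 0%nat)).

Fixpoint hist (n : nat) : list (nat * nat) :=
  match n with
  | O => (1%nat, 0%nat) :: nil
  | S m =>
      let h := hist m in
      (* b(n) = n - a(b(n-1)), then a(n) = n - b(a(n-1)), with b(n) now known *)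
      let bn := (n - lookA h (lookB h m))%nat in
      let an := (n - (if Nat.eqb (lookA h m) n then bn else lookB h (lookA h m)))%nat in
      (an, bn) :: h
  end.

Definition hof_a (n : nat) : nat := fst (hd (0%nat, 0%nat) (hist n)).
Definition hof_b (n : nat) : nat := snd (hd (0%nat, 0%nat) (hist n)).

Example hof_a_vals : map hof_a (seq 0 11) = (1::1::2::2::3::3::4::5::5::6::6::nil)%nat.
Proof. reflexivity. Qed.
Example hof_b_vals : map hof_b (seq 0 11) = (0::0::1::2::2::3::4::4::5::6::6::nil)%nat.
Proof. reflexivity. Qed.

Definition alpha : R := (sqrt 5 - 1) / 2.

From Stdlib Require Import ClassicalDescription ZArith.

Definition hof_eps1 (n : nat) : Z :=
  if excluded_middle_informative (exists k, (1 <= k)%nat /\ n = (fib (2 * k) - 1)%nat)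
  then 1%Z else 0%Z.
Definition hof_eps2 (n : nat) : Z :=
  if excluded_middle_informative (exists k, (1 <= k)%nat /\ n = (fib (2 * k + 1) - 1)%nat)
  then 1%Z else 0%Z.

(* Main.v *)
Require Import Defs.
From Stdlib Require Import Reals ZArith Lia Lra Psatz List ClassicalDescription.
Open Scope R_scope.
Open Scope list_scope.

Lemma hist_len m : length (hist m) = S m.
Proof. induction m; simpl; auto. Qed.

Lemma hist_S m : hist (S m) =
  ((S m - (if Nat.eqb (lookA (hist m) m) (S m) then (S m - lookA (hist m) (lookB (hist m) m))%nat
           else lookB (hist m) (lookA (hist m) m)))%nat,
   (S m - lookA (hist m) (lookB (hist m) m))%nat) :: hist m.
Proof. reflexivity. Qed.

Lemma nth_hist m : forall i, (i <= m)%nat -> nth (m - i) (hist m) (0%nat,0%nat) = hd (0%nat,0%nat) (hist i).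
Proof.
  induction m; intros i Hi.
  - assert (i = 0%nat) by lia; subst. reflexivity.
  - destruct (Nat.eq_dec i (S m)) as [->|Hne].
    + rewrite Nat.sub_diag. reflexivity.
    + replace (S m - i)%nat with (S (m - i)) by lia.
      rewrite hist_S. simpl nth. apply IHm. lia.
Qed.

Lemma lookA_hist m i : (i <= m)%nat -> lookA (hist m) i = hof_a i.
Proof. intros H. unfold lookA, hof_a. rewrite hist_len.
  replace (S m - 1 - i)%nat with (m - i)%nat by lia. rewrite nth_hist; auto. Qed.
Lemma lookB_hist m i : (i <= m)%nat -> lookB (hist m) i = hof_b i.
Proof. intros H. unfold lookB, hof_b. rewrite hist_len.
  replace (S m - 1 - i)%nat with (m - i)%nat by lia. rewrite nth_hist; auto. Qed.

Lemma hof_b_S m : (hof_b m <= m)%nat -> hof_b (S m) = (S m - hof_a (hof_b m))%nat.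
Proof. intros H. unfold hof_b at 1. rewrite hist_S. simpl.
  rewrite (lookB_hist m m) by lia. rewrite lookA_hist by auto. reflexivity. Qed.

Lemma hof_a_S m : (hof_a m <= S m)%nat -> hof_a (S m) = (S m - hof_b (hof_a m))%nat.
Proof. intros H. unfold hof_a at 1. rewrite hist_S. cbn [hd fst].
  rewrite (lookA_hist m m) by lia.
  destruct (Nat.eqb_spec (hof_a m) (S m)) as [E|E].
  - rewrite E. unfold hof_b. rewrite hist_S. cbn [hd snd]. reflexivity.
  - rewrite lookB_hist by lia. reflexivity.
Qed.

Lemma s5 : sqrt 5 * sqrt 5 = 5. Proof. apply sqrt_sqrt; lra. Qed.
Lemma s5b : 2.2 < sqrt 5 < 2.3.
Proof. pose proof s5. pose proof (sqrt_pos 5). split; nra. Qed.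
Lemma al_sq : alpha * alpha = 1 - alpha.
Proof. unfold alpha. pose proof s5. nra. Qed.
Lemma al_b : 0.6 < alpha < 0.65.
Proof. unfold alpha. pose proof s5b. lra. Qed.

Lemma descent : forall N q, (q*q + q*N = N*N)%nat -> N = 0%nat.
Proof.
  induction N as [N IH] using (well_founded_induction lt_wf).
  intros q H. destruct (Nat.eq_dec q 0) as [->|Hq]. { nia. }
  assert (q < N)%nat by nia.
  assert (q = 0%nat). { apply (IH q H0 (N - q)%nat).
    replace N with (q + (N - q))%nat in H by lia. nia. }
  lia.
Qed.

Lemma irr : forall N q : nat, (1 <= N)%nat -> INR N * alpha <> INR q.
Proof.
  intros N q HN E. unfold alpha in E.
  assert (E2 : INR N * sqrt 5 = 2 * INR q + INR N) by lra.
  assert (E3 : INR (5*N*N) = INR ((2*q+N)*(2*q+N))).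
  { rewrite !mult_INR, !plus_INR, !mult_INR. replace (INR 5) with 5 by (simpl; lra).
    replace (INR 2) with 2 by (simpl; lra). rewrite <- E2.
    pose proof s5. nra. }
  apply INR_eq in E3. assert (N = 0%nat) by (apply (descent N q); nia). lia.
Qed.

Lemma pow_le1 : forall d, 0 < alpha ^ d <= 1.
Proof. pose proof al_b. induction d; simpl; nra. Qed.
Lemma pow_dec : forall m k, (m <= k)%nat -> alpha ^ k <= alpha ^ m.
Proof. intros m k H. replace k with (m + (k - m))%nat by lia. rewrite pow_add.
  pose proof (pow_le1 m). pose proof (pow_le1 (k-m)). nra. Qed.

Lemma fib_SS k : fib (S (S k)) = (fib (S k) + fib k)%nat. Proof. reflexivity. Qed.

Lemma fib_gen : forall k,
  INR (fib (S k)) * alpha - INR (fib k) = (-1)^k * alpha ^ (S k) /\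
  INR (fib (S (S k))) * alpha - INR (fib (S k)) = (-1)^(S k) * alpha ^ (S (S k)).
Proof.
  pose proof al_sq.
  induction k as [|k [IH1 IH2]].
  - simpl. lra.
  - split; [exact IH2|]. rewrite (fib_SS (S k)), (fib_SS k), !plus_INR.
    rewrite (fib_SS k), plus_INR in IH2.
    simpl pow in *. set (s := (-1)^k) in *. set (p := alpha ^ k) in *.
    assert (s*alpha*p*(alpha*alpha) = s*alpha*p*(1-alpha)) by (rewrite H; ring).
    nra.
Qed.

Lemma fib_alpha : forall j,
  INR (fib (2*j+1)) * alpha = INR (fib (2*j)) + alpha ^ (2*j+1) /\
  INR (fib (2*j+2)) * alpha = INR (fib (2*j+1)) - alpha ^ (2*j+2).
Proof.
  intros j. destruct (fib_gen (2*j)) as [H1 H2].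
  rewrite pow_1_odd in H2. rewrite pow_1_even in H1.
  replace (S (2*j)) with (2*j+1)%nat in * by lia.
  replace (S (2*j+1)) with (2*j+2)%nat in * by lia.
  split; lra.
Qed.

Definition G (n : nat) : nat := Z.to_nat (Int_part ((INR n + 1) * alpha)).

Lemma Int_nonneg r : 0 <= r -> (0 <= Int_part r)%Z.
Proof. intros H. destruct (base_Int_part r) as [_ H2].
  assert (-1 < IZR (Int_part r)) by lra. apply lt_IZR in H0. lia. Qed.

Lemma G_Z n : Int_part ((INR n + 1) * alpha) = Z.of_nat (G n).
Proof. unfold G. rewrite Z2Nat.id; auto. apply Int_nonneg.
  pose proof (pos_INR n). pose proof al_b. nra. Qed.

Lemma Gbnd n : INR (G n) < (INR n + 1) * alpha < INR (G n) + 1.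
Proof.
  pose proof (base_Int_part ((INR n + 1) * alpha)) as [H1 H2].
  rewrite G_Z, <- INR_IZR_INZ in H1, H2. split; [|lra].
  destruct H1 as [H1|H1]; auto. exfalso.
  apply (irr (S n) (G n)); [lia|]. rewrite S_INR. lra.
Qed.

Lemma nat_lt_R a b : INR a < INR b + 1 -> (a <= b)%nat.
Proof. intros H. destruct (le_lt_dec a b); auto. apply le_INR in l.
  rewrite S_INR in l. lra. Qed.

Lemma Gchar n m : INR m <= (INR n + 1) * alpha < INR m + 1 -> G n = m.
Proof. intros [H1 H2]. pose proof (Gbnd n) as [H3 H4].
  apply Nat.le_antisymm; apply nat_lt_R; lra. Qed.

Lemma G_le n : (G n <= n)%nat.
Proof. apply nat_lt_R. pose proof (Gbnd n). pose proof al_b. pose proof (pos_INR n). nra. Qed.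

Lemma G_pos n : (1 <= n)%nat -> (1 <= G n)%nat.
Proof. intros H. apply le_INR in H. simpl in H. pose proof (Gbnd n) as [H1 H2]. pose proof al_b.
  destruct (G n) eqn:E; [|lia]. simpl in H2. nra. Qed.

Lemma G_rec n : G (S n) = (S n - G (G n))%nat.
Proof.
  pose proof (G_le (G n)). pose proof (G_le n).
  assert (G (S n) + G (G n) = S n)%nat; [|lia].
  pose proof (Gbnd n) as [A1 A2]. pose proof (Gbnd (S n)) as [B1 B2].
  pose proof (Gbnd (G n)) as [C1 C2]. rewrite S_INR in *.
  pose proof al_b. pose proof al_sq.
  assert (HN : (G n <= G (S n) <= S (G n))%nat).
  { split; apply nat_lt_R; try rewrite S_INR; lra. }
  assert (Hc : 0 < 1 + alpha) by lra.
  apply Nat.le_antisymm; apply nat_lt_R; rewrite plus_INR; rewrite S_INR;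
  set (N := INR n + 1) in *; set (m := INR (G n)) in *;
  set (d := INR (G (S n))) in *; set (c := INR (G (G n))) in *.
  all: assert (NA : N*alpha*alpha = N - N*alpha) by (rewrite Rmult_assoc, al_sq; ring).
  all: assert (C1' : m*alpha + alpha - 1 < c) by lra.
  all: assert (C2' : c < m*alpha + alpha) by lra.
  - destruct (Nat.eq_dec (G (S n)) (G n)) as [E|E].
    + assert (d = m) by (unfold d, m; rewrite E; auto).
      assert (m*alpha < N*alpha*alpha) by (apply Rmult_lt_compat_r; lra).
      lra.
    + assert (d = m + 1) by (unfold d, m; replace (G (S n)) with (S (G n)) by lia; rewrite S_INR; auto).
      assert (m*alpha < (N*alpha+alpha-1)*alpha) by (apply Rmult_lt_compat_r; lra).
      assert ((N*alpha+alpha-1)*alpha = N - N*alpha + alpha*alpha - alpha) by (rewrite <- NA; ring).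
      lra.
  - destruct (Nat.eq_dec (G (S n)) (G n)) as [E|E].
    + assert (d = m) by (unfold d, m; rewrite E; auto).
      assert ((N*alpha+alpha-1)*alpha < m*alpha) by (apply Rmult_lt_compat_r; lra).
      assert ((N*alpha+alpha-1)*alpha = N - N*alpha + alpha*alpha - alpha) by (rewrite <- NA; ring).
      lra.
    + assert (d = m + 1) by (unfold d, m; replace (G (S n)) with (S (G n)) by lia; rewrite S_INR; auto).
      assert ((N*alpha-1)*alpha < m*alpha) by (apply Rmult_lt_compat_r; lra).
      assert ((N*alpha-1)*alpha = N - N*alpha - alpha) by (rewrite <- NA; ring).
      lra.
Qed.


Ltac toR H := apply (f_equal INR) in H; rewrite ?plus_INR in H; simpl (INR 1) in H; simpl (INR 2) in H.

Lemma a3 : alpha ^ 3 = 2*alpha - 1.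
Proof. pose proof al_sq. simpl. nra. Qed.
Lemma a2 : alpha ^ 2 = 1 - alpha.
Proof. pose proof al_sq. simpl. nra. Qed.
Lemma podd j : (1 <= j)%nat -> 0 < alpha ^ (2*j+1) <= 2*alpha - 1.
Proof. intros. rewrite <- a3. split; [apply pow_le1|apply pow_dec; lia]. Qed.
Lemma podd0 j : 0 < alpha ^ (2*j+1) <= alpha.
Proof. split; [apply pow_le1|]. rewrite <- (pow_1 alpha) at 2. apply pow_dec; lia. Qed.
Lemma peven j : 0 < alpha ^ (2*j+2) <= 1 - alpha.
Proof. rewrite <- a2. split; [apply pow_le1|apply pow_dec; lia]. Qed.

Lemma GA j x : (x + 1 = fib (2*j+1))%nat -> G x = fib (2*j).
Proof. intros H. toR H. destruct (fib_alpha j) as [F1 _]. pose proof (podd0 j). pose proof al_b.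
  apply Gchar. rewrite H. lra. Qed.

Lemma GB j x m : (1 <= j)%nat -> (x + 2 = fib (2*j+1))%nat -> (m + 1 = fib (2*j))%nat -> G x = m.
Proof. intros Hj H Hm. toR H. toR Hm. destruct (fib_alpha j) as [F1 _]. pose proof (podd j Hj). pose proof al_b.
  apply Gchar. replace (INR x + 1) with (INR (fib (2*j+1)) - 1) by lra. lra. Qed.

Lemma GBc j x : (1 <= j)%nat -> (G x + 1 = fib (2*j))%nat -> (x + 2 = fib (2*j+1))%nat.
Proof. intros Hj Hm. toR Hm. destruct (fib_alpha j) as [F1 _]. pose proof (podd j Hj). pose proof al_b.
  pose proof (Gbnd x).
  destruct (lt_eq_lt_dec (x+2) (fib (2*j+1))) as [[l|e]|l]; auto; apply le_INR in l;
    rewrite ?S_INR, ?plus_INR in l; simpl (INR 2) in l; exfalso.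
  - assert ((INR x + 1) * alpha <= (INR (fib (2*j+1)) - 2)*alpha) by (apply Rmult_le_compat_r; lra). lra.
  - assert ((INR x + 1) * alpha >= (INR (fib (2*j+1)))*alpha) by (apply Rmult_ge_compat_r; lra). lra.
Qed.

Lemma GD j x m : (x + 1 = fib (2*j+2))%nat -> (m + 1 = fib (2*j+1))%nat -> G x = m.
Proof. intros H Hm. toR H. toR Hm. destruct (fib_alpha j) as [_ F1]. pose proof (peven j). pose proof al_b.
  apply Gchar. rewrite H. lra. Qed.

Lemma GD' j x m : (1 <= j)%nat -> (x + 2 = fib (2*j+2))%nat -> (m + 1 = fib (2*j+1))%nat -> G x = m.
Proof. intros Hj H Hm. toR H. toR Hm. destruct (fib_alpha j) as [_ F1]. pose proof (peven j). pose proof al_b.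
  apply Gchar. replace (INR x + 1) with (INR (fib (2*j+2)) - 1) by lra. lra. Qed.

Lemma GE j x : (1 <= j)%nat -> (G x + 1 = fib (2*j+1))%nat ->
  (x + 1 = fib (2*j+2))%nat \/ (x + 2 = fib (2*j+2))%nat.
Proof. intros Hj Hm. toR Hm. destruct (fib_alpha j) as [_ F1]. pose proof (peven j). pose proof al_b.
  pose proof (Gbnd x).
  destruct (lt_eq_lt_dec (x+2) (fib (2*j+2))) as [[l|e]|l]; auto.
  - exfalso. apply le_INR in l.
    rewrite ?S_INR, ?plus_INR in l; simpl (INR 2) in l.
    assert ((INR x + 1) * alpha <= (INR (fib (2*j+2)) - 2)*alpha) by (apply Rmult_le_compat_r; lra). lra.
  - destruct (Nat.eq_dec (x+1) (fib (2*j+2))); auto. exfalso.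
    assert (l' : (S (fib (2*j+2)) <= x+1)%nat) by lia. apply le_INR in l'.
    rewrite S_INR, plus_INR in l'. simpl (INR 1) in l'.
    assert ((INR x + 1) * alpha >= (INR (fib (2*j+2)) + 1)*alpha) by (apply Rmult_ge_compat_r; lra). lra.
Qed.

Lemma GF j : G (fib (2*j+2)) = fib (2*j+1).
Proof. destruct (fib_alpha j) as [_ F1]. pose proof (peven j). pose proof al_b.
  apply Gchar. lra. Qed.

Lemma GG j : (1 <= j)%nat -> G (fib (2*j+1)) = fib (2*j).
Proof. intros Hj. destruct (fib_alpha j) as [F1 _]. pose proof (podd j Hj). pose proof al_b.
  apply Gchar. lra. Qed.

Lemma G1 : G 1 = 1%nat.
Proof. apply Gchar. pose proof al_b. simpl. lra. Qed.

Lemma fib_le_S n : (fib n <= fib (S n))%nat.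
Proof. destruct n; [simpl; lia|]. rewrite fib_SS. lia. Qed.
Lemma fib_mono i j : (i <= j)%nat -> (fib i <= fib j)%nat.
Proof. induction 1; auto. pose proof (fib_le_S m). lia. Qed.

Lemma fS j : (fib (2*j+2) = fib (2*j+1) + fib (2*j))%nat.
Proof. replace (2*j+2)%nat with (S (S (2*j))) by lia. rewrite fib_SS. f_equal. f_equal. lia. Qed.
Lemma fS' j : (fib (2*j+3) = fib (2*j+2) + fib (2*j+1))%nat.
Proof. replace (2*j+3)%nat with (S (S (2*j+1))) by lia. rewrite fib_SS. f_equal. f_equal. lia. Qed.

Lemma N1 k i : (1 <= k)%nat -> (fib (2*k+1) + 1 <> fib (2*i+1))%nat.
Proof. intros Hk E. destruct (le_lt_dec i k).
  - pose proof (fib_mono (2*i+1) (2*k+1) ltac:(lia)). lia.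
  - pose proof (fib_mono (2*(k+1)+1) (2*i+1) ltac:(lia)).
    replace (2*(k+1)+1)%nat with (2*k+3)%nat in H by lia. rewrite fS' in H.
    pose proof (fib_mono 4 (2*k+2) ltac:(lia)). change (fib 4) with 3%nat in H0. lia.
Qed.

Lemma N2 j i : (fib (2*j+2) + 1 <> fib (2*i))%nat.
Proof. intros E. destruct (le_lt_dec i (j+1)).
  - pose proof (fib_mono (2*i) (2*j+2) ltac:(lia)). lia.
  - pose proof (fib_mono (2*j+4) (2*i) ltac:(lia)).
    replace (2*j+4)%nat with (S (S (2*j+2))) in H by lia. rewrite fib_SS in H.
    replace (S (2*j+2)) with (2*j+3)%nat in H by lia.
    pose proof (fib_mono 3 (2*j+3) ltac:(lia)). change (fib 3) with 2%nat in H0. lia.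
Qed.

Definition E1 n := exists k, (1 <= k)%nat /\ n = (fib (2 * k) - 1)%nat.
Definition E2 n := exists k, (1 <= k)%nat /\ n = (fib (2 * k + 1) - 1)%nat.

Lemma e1T n : E1 n -> hof_eps1 n = 1%Z.
Proof. unfold hof_eps1, E1. destruct excluded_middle_informative; tauto. Qed.
Lemma e1F n : ~ E1 n -> hof_eps1 n = 0%Z.
Proof. unfold hof_eps1, E1. destruct excluded_middle_informative; tauto. Qed.
Lemma e2T n : E2 n -> hof_eps2 n = 1%Z.
Proof. unfold hof_eps2, E2. destruct excluded_middle_informative; tauto. Qed.
Lemma e2F n : ~ E2 n -> hof_eps2 n = 0%Z.
Proof. unfold hof_eps2, E2. destruct excluded_middle_informative; tauto. Qed.

Lemma fpos1 k : (1 <= k)%nat -> (1 <= fib (2*k))%nat.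
Proof. intros. pose proof (fib_mono 2 (2*k) ltac:(lia)). change (fib 2) with 1%nat in H0. lia. Qed.
Lemma fpos2 k : (1 <= k)%nat -> (2 <= fib (2*k+1))%nat.
Proof. intros. pose proof (fib_mono 3 (2*k+1) ltac:(lia)). change (fib 3) with 2%nat in H0. lia. Qed.

Definition PA i := Z.of_nat (hof_a i) = (Z.of_nat (G i) + hof_eps1 i)%Z.
Definition PB i := Z.of_nat (hof_b i) = (Z.of_nat (G i) - hof_eps2 i)%Z.

Lemma e1_01 n : hof_eps1 n = 0%Z \/ hof_eps1 n = 1%Z.
Proof. unfold hof_eps1. destruct excluded_middle_informative; auto. Qed.
Lemma e2_01 n : hof_eps2 n = 0%Z \/ hof_eps2 n = 1%Z.
Proof. unfold hof_eps2. destruct excluded_middle_informative; auto. Qed.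

Lemma stepB n : (forall i, (i <= n)%nat -> PA i /\ PB i) -> PB (S n).
Proof.
  intros IH. destruct (IH n (le_n n)) as [_ PBn]. unfold PB in PBn.
  pose proof (G_le n). pose proof (e2_01 n).
  assert (Hb : (hof_b n <= n)%nat) by lia.
  destruct (IH _ Hb) as [PAb _]. unfold PA in PAb.
  unfold PB. rewrite (hof_b_S n Hb).
  destruct (classic (E2 n)) as [HE|HE].
  - rewrite (e2T _ HE) in PBn. destruct HE as [[|j] [Hk Hn]]; [lia|].
    replace (2 * S j + 1)%nat with (2*j+3)%nat in Hn by lia.
    assert (HG : G n = fib (2*j+2)). { replace (2*j+2)%nat with (2*(S j))%nat by lia.
      apply GA. replace (2 * S j + 1)%nat with (2*j+3)%nat by lia. pose proof (fpos2 (S j)).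
      replace (2 * S j + 1)%nat with (2*j+3)%nat in H1 by lia. lia. }
    assert (Hf := fS' j). pose proof (fS j). pose proof (fpos1 (S j) ltac:(lia)).
    replace (2 * S j)%nat with (2*j+2)%nat in H2 by lia.
    assert (HE1 : E1 (hof_b n)). { exists (S j). split; [lia|].
      replace (2 * S j)%nat with (2*j+2)%nat by lia. lia. }
    rewrite (e1T _ HE1) in PAb.
    assert (HG2 : G (hof_b n) = (fib (2*j+1) - 1)%nat). { apply (GD j). lia.
      pose proof (fib_mono 1 (2*j+1) ltac:(lia)). change (fib 1) with 1%nat in H3. lia. }
    rewrite HG2 in PAb.
    assert (HGS : G (S n) = fib (2*j+2)). { replace (2*j+2)%nat with (2*(S j))%nat by lia.
      replace (S n) with (fib (2*(S j)+1)). apply GG; lia.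
      replace (2 * S j + 1)%nat with (2*j+3)%nat by lia. lia. }
    rewrite HGS. rewrite e2F.
    2:{ intros [i [Hi Hi']]. apply (N1 (S j) i ltac:(lia)).
        replace (2 * S j + 1)%nat with (2*j+3)%nat by lia. pose proof (fpos2 i Hi). lia. }
    pose proof (fib_mono 1 (2*j+1) ltac:(lia)). change (fib 1) with 1%nat in H3. lia.
  - rewrite (e2F _ HE) in PBn.
    assert (Hbn : hof_b n = G n) by lia. rewrite Hbn in PAb |- *.
    pose proof (G_rec n).
    assert (hof_eps1 (G n) = hof_eps2 (S n)).
    { destruct (classic (E1 (G n))) as [Q1|Q1].
      - rewrite (e1T _ Q1). symmetry. apply e2T. destruct Q1 as [k [Hk Hk']].
        exists k. split; auto. pose proof (fpos1 k Hk). pose proof (GBc k n Hk ltac:(lia)). lia.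
      - rewrite (e1F _ Q1). symmetry. apply e2F. intros [k [Hk Hk']]. apply Q1.
        exists k. split; auto. pose proof (fpos2 k Hk). pose proof (fpos1 k Hk).
        rewrite (GB k n (fib (2*k) - 1) Hk); lia. }
    pose proof (G_pos (S n) ltac:(lia)). pose proof (e1_01 (G n)) as Z1. pose proof (G_le (G n)).
    destruct Z1 as [Z1|Z1]; rewrite Z1 in *; lia.
Qed.

Lemma stepA n : (forall i, (i <= n)%nat -> PA i /\ PB i) -> PB (S n) -> PA (S n).
Proof.
  intros IH PBS. destruct (IH n (le_n n)) as [PAn _]. unfold PA in PAn.
  pose proof (G_le n). pose proof (e1_01 n) as Z0.
  assert (Ha : (hof_a n <= S n)%nat) by lia.
  assert (PBa : PB (hof_a n)).
  { destruct (Nat.eq_dec (hof_a n) (S n)) as [E|E]; [rewrite E; auto|]. apply IH. lia. }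
  unfold PB in PBa. unfold PA. rewrite (hof_a_S n Ha).
  destruct (classic (E1 n)) as [HE|HE].
  - rewrite (e1T _ HE) in PAn. destruct HE as [[|j] [Hk Hn]]; [lia|].
    replace (2 * S j)%nat with (2*j+2)%nat in Hn by lia.
    pose proof (fS j). pose proof (fib_mono 1 (2*j+1) ltac:(lia)) as F1. change (fib 1) with 1%nat in F1.
    pose proof (fpos1 (S j) ltac:(lia)) as F2. replace (2 * S j)%nat with (2*j+2)%nat in F2 by lia.
    assert (HG : G n = (fib (2*j+1) - 1)%nat) by (apply (GD j); lia).
    rewrite HG in PAn.
    assert (Han : hof_a n = fib (2*j+1)) by lia. rewrite Han in PBa |- *.
    assert (HS : S n = fib (2*j+2)) by lia. rewrite HS.
    rewrite GF. rewrite e1F. 2:{ intros [i [Hi Hi']]. apply (N2 j i). pose proof (fpos1 i Hi). lia. }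
    destruct j as [|j].
    + change (fib (2*0+1)) with 1%nat in *. change (fib (2*0+2)) with 1%nat in *.
      rewrite G1 in PBa. rewrite e2T in PBa. 2:{ exists 1%nat. split; auto. }
      lia.
    + rewrite GG in PBa by lia. rewrite e2F in PBa.
      2:{ intros [i [Hi Hi']]. apply (N1 (S j) i ltac:(lia)). pose proof (fpos2 i Hi). lia. }
      pose proof (fS (S j)). lia.
  - rewrite (e1F _ HE) in PAn.
    assert (Han : hof_a n = G n) by lia. rewrite Han in PBa |- *.
    pose proof (G_rec n).
    assert (hof_eps2 (G n) = hof_eps1 (S n)).
    { destruct (classic (E2 (G n))) as [Q1|Q1].
      - rewrite (e2T _ Q1). symmetry. apply e1T. destruct Q1 as [k [Hk Hk']].
        pose proof (fpos2 k Hk). destruct (GE k n Hk ltac:(lia)) as [C|C].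
        + exfalso. apply HE. exists (S k). split; [lia|].
          replace (2 * S k)%nat with (2*k+2)%nat by lia. lia.
        + exists (S k). split; [lia|]. replace (2 * S k)%nat with (2*k+2)%nat by lia. lia.
      - rewrite (e2F _ Q1). symmetry. apply e1F. intros [[|j] [Hk Hk']]; [lia|]. apply Q1.
        replace (2 * S j)%nat with (2*j+2)%nat in Hk' by lia.
        destruct j as [|j]. { change (fib (2*0+2)) with 1%nat in Hk'. lia. }
        exists (S j). split; [lia|].
        pose proof (fpos2 (S j) ltac:(lia)).
        rewrite (GD' (S j) n (fib (2*S j+1) - 1)); try lia.
        }
    pose proof (e2_01 (G n)) as Z1. pose proof (G_le (G n)).
    destruct Z1 as [Z1|Z1]; rewrite Z1 in *; lia.
Qed.

Lemma main n : forall i, (i <= n)%nat -> PA i /\ PB i.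
Proof.
  induction n; intros i Hi.
  - assert (i = 0%nat) by lia. subst. unfold PA, PB.
    replace (G 0) with 0%nat. 2:{ symmetry. apply Gchar. pose proof al_b. simpl. lra. }
    rewrite e1T. 2:{ exists 1%nat. auto. }
    rewrite e2F. 2:{ intros [k [Hk Hk']]. pose proof (fpos2 k Hk). lia. }
    split; reflexivity.
  - destruct (Nat.eq_dec i (S n)) as [->|E]; [|apply IHn; lia].
    assert (PB (S n)) by (apply stepB; auto). split; auto. apply stepA; auto.
Qed.

Theorem theorem8 : forall n : nat,
  Z.of_nat (hof_a n) = (Int_part ((INR n + 1) * alpha)%R + hof_eps1 n)%Z /\
  Z.of_nat (hof_b n) = (Int_part ((INR n + 1) * alpha)%R - hof_eps2 n)%Z.
Proof. intros n. rewrite G_Z. apply (main n n (le_n n)). Qed.
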